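(* Let $L=L(m,n;k,l)$ be an $L$-shaped supergrid graph with two distinct vertices $s$ and $t$. If $L$ has a Hamiltonian $(s,t)$-path, then none of the following holds: (F1) $s$ or $t$ is a cut vertex of $L$, or $\{s,t\}$ is a vertex cut of $L$; (F4) there is a vertex $w$ of $L$ with $\deg(w)=1$, $w\ne s$, $w\ne t$; (F5) $m-k=1$, $n-l=2$, $l=1$, $k\ge 2$, and $\{s,t\}=\{(1,2),(2,3)\}$ or $\{s,t\}=\{(1,3),(2,2)\}$.
   Context: The infinite supergrid graph has as vertices all points $(x,y)\in\mathbb{Z}^2$, two distinct vertices $u,v$ being adjacent iff $|u_x-v_x|\le 1$ and $|u_y-v_y|\le 1$. For integers $m,n>1$ and $k,l\ge 1$ with $m-k\ge 1$, $n-l\ge 1$, $L(m,n;k,l)$ is the subgraph induced by $\{(x,y):1\le x\le m,\ 1\le y\le n\}\setminus\{(x,y): m-k+1\le x\le m,\ 1\le y\le l\}$ ($(1,1)$ is the upper-left corner, $y$ increases downward). A vertex set $V_1$ is a vertex cut of a connected graph $G$ if $G-V_1$ is disconnected; $v$ is a cut vertex if $\{v\}$ is a vertex cut. A Hamiltonian $(s,t)$-path is a simple path from $s$ to $t$ visiting every vertex exactly once. *)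

(* Defs.v *)
From Stdlib Require Import ZArith List Lia.
Import ListNotations.
Open Scope Z_scope.

Definition vertex := (Z * Z)%type.

Definition sg_adj (u v : vertex) : Prop :=
  u <> v /\ Z.abs (fst u - fst v) <= 1 /\ Z.abs (snd u - snd v) <= 1.

Definition inL (m n k l : Z) (v : vertex) : Prop :=
  (1 <= fst v <= m /\ 1 <= snd v <= n) /\
  ~ (m - k + 1 <= fst v <= m /\ 1 <= snd v <= l).

Definition L_params (m n k l : Z) : Prop :=
  m > 1 /\ n > 1 /\ k >= 1 /\ l >= 1 /\ m - k >= 1 /\ n - l >= 1.

Fixpoint is_walk (p : list vertex) : Prop :=
  match p with
  | [] => True
  | [_] => True
  | u :: ((v :: _) as q) => sg_adj u v /\ is_walk q
  end.

Definition ham_path (V : vertex -> Prop) (s t : vertex) (p : list vertex) : Prop :=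
  NoDup p /\ is_walk p /\ (forall v, In v p <-> V v) /\
  head p = Some s /\ last p s = t /\ p <> [].

Definition connected_in (V : vertex -> Prop) (u v : vertex) : Prop :=
  exists p : list vertex, is_walk p /\ (forall w, In w p -> V w) /\
    head p = Some u /\ last p u = v /\ p <> [].

Definition disconnected (V : vertex -> Prop) : Prop :=
  exists u v, V u /\ V v /\ ~ connected_in V u v.

Definition vertex_cut (V : vertex -> Prop) (C : vertex -> Prop) : Prop :=
  (forall w, C w -> V w) /\ disconnected (fun w => V w /\ ~ C w).

Definition cut_vertex (V : vertex -> Prop) (x : vertex) : Prop :=
  vertex_cut V (fun w => w = x).

Definition degree_one (V : vertex -> Prop) (w : vertex) : Prop :=
  exists u, V u /\ sg_adj w u /\ forall u', V u' -> sg_adj w u' -> u' = u.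

(* Main.v *)
Require Import Defs.
From Stdlib Require Import ZArith List Lia.
Import ListNotations.
Open Scope Z_scope.

Lemma sg_adj_sym u v : sg_adj u v -> sg_adj v u.
Proof.
  unfold sg_adj; intros [H1 [H2 H3]]; split; [congruence|].
  split; [rewrite <- Z.abs_opp; replace (-(fst v - fst u)) with (fst u - fst v) by lia
         |rewrite <- Z.abs_opp; replace (-(snd v - snd u)) with (snd u - snd v) by lia]; auto.
Qed.

Definition IH (V : vertex -> Prop) (f : nat -> vertex) (N : nat) (s t : vertex) : Prop :=
  (1 <= N)%nat /\ f 0%nat = s /\ f (N-1)%nat = t /\
  (forall i, (S i < N)%nat -> sg_adj (f i) (f (S i))) /\
  (forall i j, (i < N)%nat -> (j < N)%nat -> f i = f j -> i = j) /\
  (forall v, V v -> exists i, (i < N)%nat /\ f i = v) /\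
  (forall i, (i < N)%nat -> V (f i)).

Lemma last_nth' (p : list vertex) x d : p <> [] -> last p x = nth (length p - 1) p d.
Proof.
  induction p as [|a q IHq]; intros H; [congruence|].
  destruct q as [|b r]; [reflexivity|].
  change (last (b :: r) x = nth (length (b :: r)) (a :: b :: r) d).
  rewrite IHq by congruence. simpl. rewrite Nat.sub_0_r. reflexivity.
Qed.

Lemma walk_nth (p : list vertex) d : is_walk p ->
  forall i, (S i < length p)%nat -> sg_adj (nth i p d) (nth (S i) p d).
Proof.
  induction p as [|a q IHq]; intros Hw i Hi; [simpl in Hi; lia|].
  destruct q as [|b r]; [simpl in Hi; lia|].
  destruct Hw as [Hab Hw].
  destruct i as [|i]; [exact Hab|].
  change (sg_adj (nth i (b :: r) d) (nth (S i) (b :: r) d)).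
  apply IHq; auto. simpl in *; lia.
Qed.

Lemma ham_IH V s t p : ham_path V s t p ->
  IH V (fun i => nth i p (0,0)) (length p) s t.
Proof.
  intros [Hnd [Hw [Hin [Hh [Hl Hne]]]]].
  refine (conj _ (conj _ (conj _ (conj _ (conj _ (conj _ _)))))).
  - destruct p; [congruence|simpl; lia].
  - destruct p; [congruence|]; simpl in *; congruence.
  - rewrite <- Hl. symmetry. apply last_nth'; auto.
  - intros i Hi. apply walk_nth; auto.
  - intros i j Hi Hj E. eapply NoDup_nth; eauto.
  - intros v Hv. apply Hin in Hv. apply In_nth; auto.
  - intros i Hi. apply Hin. apply nth_In; auto.
Qed.

Lemma IH_rev V f N s t : IH V f N s t -> IH V (fun i => f (N - 1 - i)%nat) N t s.
Proof.
  intros [HN [H0 [Ht [Ha [Hinj [Hs Hv]]]]]].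
  refine (conj _ (conj _ (conj _ (conj _ (conj _ (conj _ _)))))).
  - auto.
  - rewrite Nat.sub_0_r; auto.
  - rewrite Nat.sub_diag; auto.
  - intros i Hi'. apply sg_adj_sym.
    replace (N - 1 - i)%nat with (S (N - 1 - S i)) by lia. apply Ha. lia.
  - intros i j Hi' Hj E. apply Hinj in E; lia.
  - intros v Hv'. destruct (Hs v Hv') as [i [Hi' E]]. exists (N - 1 - i)%nat.
    split; [lia|]. replace (N - 1 - (N - 1 - i))%nat with i by lia. auto.
  - intros i Hi'. apply Hv. lia.
Qed.

Lemma walk_seq (g : nat -> vertex) a n :
  (forall k, (a <= k)%nat -> (k < a + n)%nat -> sg_adj (g k) (g (S k))) ->
  is_walk (map g (seq a (S n))).
Proof.
  revert a; induction n as [|n IHn]; intros a H; [simpl; auto|].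
  change (is_walk (g a :: map g (seq (S a) (S n)))).
  simpl seq at 1. simpl map. split.
  - apply H; lia.
  - change (is_walk (map g (seq (S a) (S n)))). apply IHn. intros k H1 H2; apply H; lia.
Qed.

Lemma last_seq (g : nat -> vertex) a n x : last (map g (seq a (S n))) x = g (a + n)%nat.
Proof.
  rewrite seq_S, map_app. simpl. rewrite last_last. reflexivity.
Qed.

Lemma conn_up V (g : nat -> vertex) i j : (i <= j)%nat ->
  (forall k, (i <= k)%nat -> (k < j)%nat -> sg_adj (g k) (g (S k))) ->
  (forall k, (i <= k)%nat -> (k <= j)%nat -> V (g k)) ->
  connected_in V (g i) (g j).
Proof.
  intros Hij Ha Hv. exists (map g (seq i (S (j - i)))).
  refine (conj _ (conj _ (conj _ (conj _ _)))).
  - apply walk_seq. intros k H1 H2; apply Ha; lia.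
  - intros w Hw. apply in_map_iff in Hw. destruct Hw as [k [<- Hk]].
    apply in_seq in Hk. apply Hv; lia.
  - reflexivity.
  - rewrite last_seq. f_equal. lia.
  - simpl; congruence.
Qed.

Lemma conn_nat V (g : nat -> vertex) i j :
  (forall k, (Nat.min i j <= k)%nat -> (k < Nat.max i j)%nat -> sg_adj (g k) (g (S k))) ->
  (forall k, (Nat.min i j <= k)%nat -> (k <= Nat.max i j)%nat -> V (g k)) ->
  connected_in V (g i) (g j).
Proof.
  intros Ha Hv. destruct (Nat.le_gt_cases i j) as [Hij|Hij].
  - apply conn_up; auto.
    + intros k H1 H2; apply Ha; lia.
    + intros k H1 H2; apply Hv; lia.
  - pose (h := fun k => g (i + j - k)%nat).
    replace (g i) with (h j) by (unfold h; f_equal; lia).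
    replace (g j) with (h i) by (unfold h; f_equal; lia).
    apply conn_up; [lia| |].
    + intros k H1 H2. unfold h. apply sg_adj_sym.
      replace (i + j - k)%nat with (S (i + j - S k)) by lia. apply Ha; lia.
    + intros k H1 H2. unfold h. apply Hv; lia.
Qed.

Lemma seg_conn V f N s t (W : vertex -> Prop) lo hi : IH V f N s t -> (hi < N)%nat ->
  (forall w, W w -> exists i, (lo <= i <= hi)%nat /\ f i = w) ->
  (forall k, (lo <= k <= hi)%nat -> W (f k)) -> ~ disconnected W.
Proof.
  intros [HN [H0 [Ht [Ha [Hinj [Hs Hv]]]]]] Hhi Hidx HW [u [v [Hu [Hv' Hnc]]]].
  destruct (Hidx u Hu) as [i [Hi <-]]. destruct (Hidx v Hv') as [j [Hj <-]].
  apply Hnc. apply conn_nat.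
  - intros k H1 H2. apply Ha. lia.
  - intros k H1 H2. apply HW. lia.
Qed.

Lemma no_F1 V f N s t : IH V f N s t -> s <> t ->
  ~ (cut_vertex V s \/ cut_vertex V t \/ vertex_cut V (fun w => w = s \/ w = t)).
Proof.
  intros HI Hst.
  pose proof HI as [HN [H0 [Ht [Ha [Hinj [Hs Hv]]]]]].
  assert (HN2 : (N - 1 <> 0)%nat) by (intro E; rewrite E in Ht; congruence).
  intros [[_ HD]|[[_ HD]|[_ HD]]]; revert HD.
  - apply (seg_conn V f N s t _ 1 (N-1) HI); [lia| |].
    + intros w [Hw Hne]. destruct (Hs w Hw) as [i [Hi E]]. exists i.
      split; auto. destruct i; [congruence|lia].
    + intros k Hk. split; [apply Hv; lia|]. intro E. rewrite <- H0 in E.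
      apply Hinj in E; lia.
  - apply (seg_conn V f N s t _ 0 (N-2) HI); [lia| |].
    + intros w [Hw Hne]. destruct (Hs w Hw) as [i [Hi E]]. exists i.
      split; auto. assert (i <> N - 1)%nat by (intro; subst; congruence). lia.
    + intros k Hk. split; [apply Hv; lia|]. intro E. rewrite <- Ht in E.
      apply Hinj in E; lia.
  - apply (seg_conn V f N s t _ 1 (N-2) HI); [lia| |].
    + intros w [Hw Hne]. destruct (Hs w Hw) as [i [Hi E]]. exists i.
      assert (i <> N - 1)%nat by (intro; subst; apply Hne; right; congruence).
      assert (i <> 0)%nat by (intro; subst; apply Hne; left; congruence). split; [lia|auto].
    + intros k Hk. split; [apply Hv; lia|]. intros [E|E].
      * rewrite <- H0 in E. apply Hinj in E; lia.
      * rewrite <- Ht in E. apply Hinj in E; lia.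
Qed.

Lemma no_F4 V f N s t w : IH V f N s t -> V w -> degree_one V w -> w <> s -> w <> t -> False.
Proof.
  intros [HN [H0 [Ht [Ha [Hinj [Hs Hv]]]]]] Hw [u [Hu [Hwu Huniq]]] Hws Hwt.
  destruct (Hs w Hw) as [i [Hi E]].
  assert (i <> 0)%nat by (intro; subst; congruence).
  assert (i <> N - 1)%nat by (intro; subst; congruence).
  assert (E1 : f (i - 1)%nat = u).
  { apply Huniq; [apply Hv; lia|]. rewrite <- E. apply sg_adj_sym.
    replace i with (S (i - 1)) at 2 by lia. apply Ha; lia. }
  assert (E2 : f (S i) = u).
  { apply Huniq; [apply Hv; lia|]. rewrite <- E. apply Ha; lia. }
  rewrite <- E2 in E1. apply Hinj in E1; lia.
Qed.

Section F5.
Variable k : Z.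
Hypothesis Hk : k >= 2.
Let V := inL (k+1) 3 k 1.

Ltac nbtac v :=
  intros H Hadj; destruct v as [a b]; unfold V, inL, sg_adj in *; cbn [fst snd] in *;
  destruct Hadj as [Hne [H1 H2]].

Lemma nb11 v : V v -> sg_adj (1,1) v -> v = (1,2) \/ v = (2,2).
Proof.
  nbtac v. assert (~ (a = 1 /\ b = 1)) by (intros [-> ->]; apply Hne; reflexivity).
  assert (a=1/\b=2 \/ a=2/\b=2) as [[-> ->]|[-> ->]] by lia; auto.
Qed.

Lemma nb13 v : V v -> sg_adj (1,3) v -> v = (1,2) \/ v = (2,2) \/ v = (2,3).
Proof.
  nbtac v. assert (~ (a = 1 /\ b = 3)) by (intros [-> ->]; apply Hne; reflexivity).
  assert (a=1/\b=2 \/ a=2/\b=2 \/ a=2/\b=3) as [[-> ->]|[[-> ->]|[-> ->]]] by lia; auto.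
Qed.

Lemma nb12 v : V v -> sg_adj (1,2) v -> v = (1,1) \/ v = (1,3) \/ v = (2,2) \/ v = (2,3).
Proof.
  nbtac v. assert (~ (a = 1 /\ b = 2)) by (intros [-> ->]; apply Hne; reflexivity).
  assert (a=1/\b=1 \/ a=1/\b=3 \/ a=2/\b=2 \/ a=2/\b=3)
    as [[-> ->]|[[-> ->]|[[-> ->]|[-> ->]]]] by lia; auto.
Qed.

Lemma V11 : V (1,1). Proof. unfold V, inL; simpl; lia. Qed.
Lemma V13 : V (1,3). Proof. unfold V, inL; simpl; lia. Qed.
Lemma V32 : V (3,2). Proof. unfold V, inL; simpl; lia. Qed.

Ltac injf Hinj E H := rewrite <- H in E; apply Hinj in E; [|lia|lia].

Lemma F5a f N : IH V f N (1,2) (2,3) -> False.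
Proof.
  intros [HN [H0 [Ht [Ha [Hinj [Hs Hv]]]]]].
  destruct (Hs _ V11) as [i [Hi Ei]].
  assert (i <> 0)%nat by (intro; subst; congruence).
  assert (i <> N - 1)%nat by (intro; subst; congruence).
  assert (P : sg_adj (f i) (f (i - 1)%nat)).
  { apply sg_adj_sym. replace (f i) with (f (S (i - 1))) by (f_equal; lia). apply Ha; lia. }
  assert (Sc : sg_adj (f i) (f (S i))) by (apply Ha; lia).
  rewrite Ei in P, Sc.
  destruct (nb11 _ (Hv (S i) ltac:(lia)) Sc) as [E2|E2]; [injf Hinj E2 H0; lia|].
  destruct (nb11 _ (Hv (i - 1)%nat ltac:(lia)) P) as [E1|E1]; [|injf Hinj E1 E2; lia].
  injf Hinj E1 H0. assert (i = 1)%nat by lia. subst i. clear P Sc E1. simpl in E2.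
  destruct (Hs _ V13) as [j [Hj Ej]].
  assert (j <> 0)%nat by (intro; subst; congruence).
  assert (j <> 1)%nat by (intro; subst; congruence).
  assert (j <> N - 1)%nat by (intro; subst; congruence).
  assert (P : sg_adj (f j) (f (j - 1)%nat)).
  { apply sg_adj_sym. replace (f j) with (f (S (j - 1))) by (f_equal; lia). apply Ha; lia. }
  assert (Sc : sg_adj (f j) (f (S j))) by (apply Ha; lia).
  rewrite Ej in P, Sc.
  destruct (nb13 _ (Hv (S j) ltac:(lia)) Sc) as [E3|[E3|E3]];
    [injf Hinj E3 H0; lia|injf Hinj E3 E2; lia|].
  destruct (nb13 _ (Hv (j - 1)%nat ltac:(lia)) P) as [E4|[E4|E4]];
    [injf Hinj E4 H0; lia| |injf Hinj E4 E3; lia].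
  injf Hinj E4 E2. injf Hinj E3 Ht. assert (j = 3)%nat by lia. subst j.
  assert (N = 5)%nat by lia. subst N. simpl in *.
  destruct (Hs _ V32) as [q [Hq Eq]].
  do 5 (destruct q as [|q]; [congruence|]). lia.
Qed.

Lemma F5b f N : IH V f N (2,2) (1,3) -> False.
Proof.
  intros [HN [H0 [Ht [Ha [Hinj [Hs Hv]]]]]].
  destruct (Hs _ V11) as [i [Hi Ei]].
  assert (i <> 0)%nat by (intro; subst; congruence).
  assert (i <> N - 1)%nat by (intro; subst; congruence).
  assert (P : sg_adj (f i) (f (i - 1)%nat)).
  { apply sg_adj_sym. replace (f i) with (f (S (i - 1))) by (f_equal; lia). apply Ha; lia. }
  assert (Sc : sg_adj (f i) (f (S i))) by (apply Ha; lia).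
  rewrite Ei in P, Sc.
  destruct (nb11 _ (Hv (S i) ltac:(lia)) Sc) as [E2|E2]; [|injf Hinj E2 H0; lia].
  destruct (nb11 _ (Hv (i - 1)%nat ltac:(lia)) P) as [E1|E1]; [injf Hinj E1 E2; lia|].
  injf Hinj E1 H0. assert (i = 1)%nat by lia. subst i. clear P Sc E1. simpl in E2.
  assert (N <> 3)%nat by (intro; subst; simpl in Ht; congruence).
  assert (Sc : sg_adj (f 2%nat) (f 3%nat)) by (apply Ha; lia).
  rewrite E2 in Sc.
  destruct (nb12 _ (Hv 3%nat ltac:(lia)) Sc) as [E3|[E3|[E3|E3]]];
    [injf Hinj E3 Ei; lia| | injf Hinj E3 H0; lia|].
  - injf Hinj E3 Ht. assert (N = 4)%nat by lia. subst N. simpl in *.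
    destruct (Hs _ V32) as [q [Hq Eq]].
    do 4 (destruct q as [|q]; [congruence|]). lia.
  - assert (N <> 4)%nat by (intro; subst; simpl in Ht; congruence).
    assert (P : sg_adj (f (N - 1)%nat) (f (N - 2)%nat)).
    { apply sg_adj_sym. replace (N - 1)%nat with (S (N - 2)) by lia. apply Ha; lia. }
    rewrite Ht in P.
    destruct (nb13 _ (Hv (N - 2)%nat ltac:(lia)) P) as [E4|[E4|E4]];
      [injf Hinj E4 E2; lia|injf Hinj E4 H0; lia|].
    injf Hinj E4 E3. assert (N = 5)%nat by lia. subst N. simpl in *.
    destruct (Hs _ V32) as [q [Hq Eq]].
    do 5 (destruct q as [|q]; [congruence|]). lia.
Qed.
End F5.

Theorem lemma7 (m n k l : Z) (s t : vertex) :
  L_params m n k l ->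
  inL m n k l s -> inL m n k l t -> s <> t ->
  (exists p, ham_path (inL m n k l) s t p) ->
  ~ ( (* F1 *)
      (cut_vertex (inL m n k l) s \/ cut_vertex (inL m n k l) t \/
       vertex_cut (inL m n k l) (fun w => w = s \/ w = t))
    \/ (* F4 *)
      (exists w, inL m n k l w /\ degree_one (inL m n k l) w /\ w <> s /\ w <> t)
    \/ (* F5 *)
      (m - k = 1 /\ n - l = 2 /\ l = 1 /\ k >= 2 /\
       ((s = (1,2) /\ t = (2,3)) \/ (s = (2,3) /\ t = (1,2)) \/
        (s = (1,3) /\ t = (2,2)) \/ (s = (2,2) /\ t = (1,3))))).
Proof.
  intros HP Hs Ht Hst [p Hp] HF.
  pose proof (ham_IH _ _ _ _ Hp) as HI.
  destruct HF as [F1|[F4|F5]].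
  - exact (no_F1 _ _ _ _ _ HI Hst F1).
  - destruct F4 as [w [Hw [Hd [H1 H2]]]]. exact (no_F4 _ _ _ _ _ _ HI Hw Hd H1 H2).
  - destruct F5 as [Hmk [Hnl [Hl1 [Hk2 Hc]]]]. subst l.
    assert (n = 3) by lia. assert (m = k + 1) by lia. subst n m.
    destruct Hc as [[-> ->]|[[-> ->]|[[-> ->]|[-> ->]]]].
    + exact (F5a k Hk2 _ _ HI).
    + exact (F5a k Hk2 _ _ (IH_rev _ _ _ _ _ HI)).
    + exact (F5b k Hk2 _ _ (IH_rev _ _ _ _ _ HI)).
    + exact (F5b k Hk2 _ _ HI).
Qed.
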